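(* Let $H$ be a graph with $1\le\delta(H)\le|V(H)|-2$ and let $\{\mathcal H_i\}_{i=1}^s$ be a $d$-sequence of $H$ with $Z=\min\{z_i(H): 2\le i\le s\}\le 0$. Let $T$ be a forest without isolated vertices of order at least $3$, let $P_T$ be the set of pendant vertices of $T$ adjacent to a vertex of degree at least $2$, and let $G=H+T$. If $|P_T|-|N_T(P_T)|\ge d_H-Z$, then $str(G)=|V(G)|+1$.
   Context: For a graph $G$ of order $p$, a numbering is a bijection $f:V(G)\to[1,p]$; $str_f(G)=\max\{f(u)+f(v): uv\in E(G)\}$ and $str(G)=\min_f str_f(G)$. $G+H$ is disjoint union; $N_T(S)$ is the set of all neighbours in $T$ of vertices of $S$; a pendant vertex has degree 1; $mK_1$ is the edgeless graph on $m$ vertices; $K_r$ the complete graph. $d$-sequence: Let $G$ have order $p$ with $1\le\delta(G)\le p-2$. Set $\mathcal G_1=G_1=G$, $m_1=0$. For each $i$, write $\mathcal G_i=m_iK_1+G_i$, where $m_i\ge0$ is the number of isolated vertices of $\mathcal G_i$ and $G_i$ has no isolated vertices. If $\mathcal G_i$ is neither of the form $mK_1$ ($m\ge1$) nor $mK_1+K_r$ ($m\ge0$, $r\ge2$), choose any vertex $u_i$ of $G_i$, put $d_i=\deg_{G_i}(u_i)$, and let $\mathcal G_{i+1}$ be obtained from $G_i$ by deleting $u_i$ together with all its neighbours in $G_i$. Stop at the first index $s$ ($s\ge 2$) for which $\mathcal G_s$ is $m_sK_1$ with $m_s\ge1$ (then set $d_s=0$) or $m_sK_1+K_r$ with $m_s\ge0$,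 $r\ge2$ (then $d_s=r-1$). The sequence $\{\mathcal G_i\}_{i=1}^s$ is a $d$-sequence of $G$. Write $d_G=d_1$, $y_j(G)=m_j+1-d_j$ and $z_i(G)=\sum_{j=2}^i y_j(G)$ for $2\le i\le s$. *)

(* Defs.v *)
(* Simple graphs are given as a vertex finType V with an
   adjacency relation e : rel V (symmetry / irreflexivity are hypotheses). *)
From mathcomp Require Import all_boot all_order all_algebra.
Set Implicit Arguments. Unset Strict Implicit. Unset Printing Implicit Defensive.
Import Order.TTheory GRing.Theory Num.Theory.

Section Graphs.
Variables (V : finType) (e : rel V).

Definition deg (x : V) : nat := #|[set y | e x y]|.

(* A numbering is a bijection V -> [1, p]; we encode it as an injective
   (hence bijective) f : V -> 'I_p, the number of v being (f v).+1. *)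
Definition strf (f : V -> 'I_#|V|) : nat :=
  \max_(u : V) \max_(v : V | e u v) ((f u).+1 + (f v).+1).

Lemma str_ex : exists n,
  [exists f : {ffun V -> 'I_#|V|}, injectiveb f && (strf f == n)].
Proof.
exists (strf (finfun enum_rank)); apply/existsP; exists (finfun enum_rank).
rewrite eqxx andbT; apply/injectiveP => x y; rewrite !ffunE; exact: enum_rank_inj.
Qed.

Definition str : nat := ex_minn str_ex.

Definition iso (W : {set V}) : {set V} :=
  [set x in W | [forall y in W, ~~ e x y]].
Definition core (W : {set V}) : {set V} := W :\: iso W.
Definition mnum (W : {set V}) : nat := #|iso W|.
Definition degIn (W : {set V}) (x : V) : nat := #|[set y in W | e x y]|.

Definition edgeless (W : {set V}) : bool :=
  [forall x in W, forall y in W, ~~ e x y].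
Definition completeOn (W : {set V}) : bool :=
  [forall x in W, forall y in W, (x != y) ==> e x y].

Definition stop_empty (W : {set V}) : bool := (W != set0) && edgeless W.
(* H[W] is m K_1 + K_r with r >= 2 (the non-isolated part is complete;
   being nonempty it has an edge, hence r >= 2) *)
Definition stop_complete (W : {set V}) : bool :=
  (core W != set0) && completeOn (core W).
Definition stopform (W : {set V}) : bool := stop_empty W || stop_complete W.

Definition dstop (W : {set V}) : nat :=
  if stop_complete W then #|core W|.-1 else 0.

(* A d-sequence: vertex sets W 1, ..., W s (G_i = H[W i]) and chosen
   vertices u 1, ..., u (s-1). *)
Definition is_dseq (s : nat) (W : nat -> {set V}) (u : nat -> V) : Prop :=
  [/\ 2 <= s, W 1 = [set: V],
      (forall i, 1 <= i < s ->
         [/\ ~~ stopform (W i), u i \in core (W i) &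
             W i.+1 = [set y in core (W i) | (y != u i) && ~~ e (u i) y]])
    & stopform (W s)].

Definition dval (s : nat) (W : nat -> {set V}) (u : nat -> V) (i : nat) : nat :=
  if i < s then degIn (W i) (u i) else dstop (W s).

Definition yval s W u (j : nat) : int :=
  ((mnum (W j)).+1)%:Z - (dval s W u j)%:Z.

Definition zval s W u (i : nat) : int := \sum_(2 <= j < i.+1) yval s W u j.

Definition Zmin s W u : int :=
  \big[Order.min/zval s W u 2]_(2 <= i < s.+1) zval s W u i.

Definition acyclic : Prop :=
  ~ exists c : seq V, [&& uniq c, 2 < size c & cycle e c].

Definition PT : {set V} :=
  [set x | (deg x == 1) && [exists y, e x y && (2 <= deg y)]].

Definition Nbh (S : {set V}) : {set V} := [set y | [exists x in S, e x y]].

End Graphs.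

Definition sum_rel (V1 V2 : finType) (e1 : rel V1) (e2 : rel V2)
  : rel (V1 + V2)%type :=
  fun a b => match a, b with
             | inl x, inl y => e1 x y
             | inr x, inr y => e2 x y
             | _, _ => false
             end.

(* Main.v *)
Require Import Defs.
From mathcomp Require Import all_boot all_order all_algebra zify.
Import Order.TTheory GRing.Theory Num.Theory.
Set Implicit Arguments. Unset Strict Implicit. Unset Printing Implicit Defensive.


Section Generic.
Variables (V : finType) (e : rel V).
Hypothesis esym : symmetric e.

Definition disj (A B : {set V}) := forall x, x \in A -> x \in B -> False.

Definition Inv (L S : {set V}) (k : V -> nat) (t0 : nat) :=
  [/\ disj L S,
   forall x y, x \in S -> e x y -> (y \in L) && (k y < k x),
   forall l, l \in L ->
     #|[set l' in L | k l' <= k l]| <= (#|[set x in S | k x <= k l]|).+1 &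
   forall v, v \in L :|: S -> k v < t0].

Definition Good (D : {set V}) (b : nat) := exists L S k t0,
  [/\ Inv L S k t0, L :|: S = D & #|L| + b <= #|S|].

Lemma good0 : Good set0 0.
Proof.
exists set0, set0, (fun _ => 0), 0; split; rewrite ?setU0 ?cards0 //.
split; [by move=> x; rewrite inE | by move=> x y; rewrite inE | by move=> l; rewrite inE |
  by move=> v; rewrite !inE].
Qed.

Lemma cardsU_disj (A B : {set V}) : disj A B -> #|A :|: B| = #|A| + #|B|.
Proof.
move=> dAB; have : A :&: B = set0.
  by apply/setP => x; rewrite !inE; apply/negP => /andP [xA xB]; exact: (dAB x).
by rewrite cardsU; move=> ->; rewrite cards0 subn0.
Qed.

Lemma good_step D b Lb Sb b' : Good D b -> disj Lb Sb ->
  disj Lb D -> disj Sb D -> #|Lb| <= b.+1 ->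
  b' + #|Lb| <= b + #|Sb| ->
  (forall x y, x \in Sb -> e x y -> (y \in Lb) || (y \in D)) ->
  Good (D :|: Lb :|: Sb) b'.
Proof.
move=> [L [S [k [t0 [[dLS HS HL Hk] DE Hb]]]]] dLbSb dLbD dSbD hLb hb' HSb.
have nLb v : v \in D -> v \notin Lb.
  by move=> vD; apply/negP => vLb; exact: (dLbD v).
have nSb v : v \in D -> v \notin Sb.
  by move=> vD; apply/negP => vSb; exact: (dSbD v).
have LD v : v \in L -> v \in D by rewrite -DE inE => ->.
have SD v : v \in S -> v \in D by rewrite -DE inE => ->; rewrite orbT.
pose k' v := if v \in Lb then t0 else if v \in Sb then t0.+1 else k v.
have k'D v : v \in D -> k' v = k v by move=> vD; rewrite /k' (negbTE (nLb _ vD)) (negbTE (nSb _ vD)).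
have kD v : v \in D -> k v < t0 by move=> vD; apply: Hk; rewrite DE.
exists (L :|: Lb), (S :|: Sb), k', t0.+2; split.
- split.
  + move=> v; rewrite !inE => /orP [vL|vLb] /orP [vS|vSb].
    * exact: (dLS v).
    * by move: (nSb _ (LD _ vL)); rewrite vSb.
    * by move: (nLb _ (SD _ vS)); rewrite vLb.
    * exact: (dLbSb v).
  + move=> x y; rewrite inE => /orP [xS|xSb] exy.
    * move: (HS x y xS exy) => /andP [yL kyx].
      by rewrite inE yL /= (k'D _ (LD _ yL)) (k'D _ (SD _ xS)).
    * have xLb : x \notin Lb.
        by apply/negP => xLb; exact: (dLbSb x).
      have -> : k' x = t0.+1 by rewrite /k' (negbTE xLb) xSb.
      move: (HSb x y xSb exy) => /orP [yLb|yD].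
      * by rewrite inE yLb orbT /k' yLb ltnSn.
      * move: yD; rewrite -DE inE => /orP [yL|yS].
        - by rewrite inE yL /= k'D ?LD // ltnS ltnW // kD // LD.
        - move: (HS y x yS); rewrite esym => /(_ exy) /andP [xL _].
          by move: (nSb _ (LD _ xL)); rewrite xSb.
  + move=> l; rewrite inE => /orP [lL|lLb].
    * have e1 : [set l' in L :|: Lb | k' l' <= k' l] = [set l' in L | k l' <= k l].
        apply/setP => v; rewrite !inE (k'D l (LD _ lL)).
        case vL: (v \in L); first by rewrite k'D ?LD.
        case vLb: (v \in Lb) => //=; rewrite /k' vLb leqNgt (kD _ (LD _ lL)) //.
      have e2 : [set x in S :|: Sb | k' x <= k' l] = [set x in S | k x <= k l].
        apply/setP => v; rewrite !inE (k'D l (LD _ lL)).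
        case vS: (v \in S); first by rewrite k'D ?SD.
        case vSb: (v \in Sb) => //=.
        have vLb : v \notin Lb.
          by apply/negP => vLb; exact: (dLbSb v).
        rewrite /k' (negbTE vLb) vSb leqNgt ltnS ltnW //.
        by rewrite (kD _ (LD _ lL)).
      by rewrite e1 e2 HL.
    * have -> : k' l = t0 by rewrite /k' lLb.
      apply: (@leq_trans (#|L| + #|Lb|)).
        by rewrite -cardsU_disj ?subset_leq_card // ?subsetIl //;
          [apply/subsetP => v; rewrite inE => /andP [] |
           move=> v vL vLb; move: (nLb _ (LD _ vL)); rewrite vLb].
      apply: (@leq_trans (#|S|).+1); first by lia.
      rewrite ltnS subset_leq_card //; apply/subsetP => v vS.
      by rewrite !inE vS /= k'D ?SD // ltnW // kD // SD.
  + move=> v; rewrite !inE => /orP [/orP [vL|vLb] | /orP [vS|vSb]].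
    * by have := kD _ (LD _ vL); rewrite k'D ?LD //; lia.
    * by rewrite /k' vLb ltnW.
    * by have := kD _ (SD _ vS); rewrite k'D ?SD //; lia.
    * have vLb : v \notin Lb.
        by apply/negP => vLb; exact: (dLbSb v).
      by rewrite /k' (negbTE vLb) vSb.
- by rewrite -DE; apply/setP => v; rewrite !inE; case: (v \in L); case: (v \in S);
     case: (v \in Lb); case: (v \in Sb).
- rewrite cardsU_disj; last first.
    by move=> v vL vLb; move: (nLb _ (LD _ vL)); rewrite vLb.
  rewrite cardsU_disj; last first.
    by move=> v vS vSb; move: (nSb _ (SD _ vS)); rewrite vSb.
  lia.
Qed.
End Generic.


Section Final.
Variables (V : finType) (e : rel V) (v0 : V).
Hypothesis esym : symmetric e.
Hypothesis hasnb : forall v, exists w, e v w.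

Lemma n0 : 0 < #|V|.
Proof. by apply/card_gt0P; exists v0. Qed.

Lemma str_lower (f : {ffun V -> 'I_#|V|}) : injective f -> #|V|.+1 <= strf e f.
Proof.
move=> finj.
have hn : #|V|.-1 < #|V| by rewrite prednK ?n0.
have : (Ordinal hn) \in codom f by apply: inj_card_onto => //; rewrite card_ord.
case/codomP => v fv.
have [w evw] := hasnb v.
rewrite /strf; apply: leq_trans (leq_bigmax v).
apply: leq_trans (leq_bigmax_cond w evw).
rewrite -fv /= prednK ?n0 //; lia.
Qed.
End Final.

Section Upper.
Variables (V : finType) (e : rel V) (v0 : V).
Hypothesis esym : symmetric e.

Lemma str_upper b : Good e setT b ->
  exists f : {ffun V -> 'I_#|V|}, injective f /\ strf e f <= #|V|.+1.
Proof.
move=> [L [S [k [t0 [[dLS HS HL Hk] DE Hb]]]]].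
pose n := #|V|.
have nV : n = #|L| + #|S| by rewrite /n -cardsT -DE cardsU_disj.
pose c v := k v * n + enum_rank v.
have rlt (v : V) : (enum_rank v : nat) < n.
  exact (ltn_ord (enum_rank v)).
idtac.
have c_inj u v : c u = c v -> u = v.
  move=> cuv; apply: enum_rank_inj; apply: val_inj => /=.
  have := congr1 (modn^~ n) cuv; rewrite /c !modnMDl !modn_small //.
have c_lt u v : k u < k v -> c u < c v.
  move=> kuv; rewrite /c; apply: (@leq_trans ((k u).+1 * n)).
    by have := rlt u; rewrite mulSn; lia.
  by apply: leq_trans (leq_addr _ _); rewrite leq_mul2r kuv orbT.
have c_le u v : c u < c v -> k u <= k v.
  by move=> cuv; rewrite leqNgt; apply/negP => /c_lt; rewrite ltnNge ltnW.
pose rk (A : {set V}) v := #|[set y in A | c y < c v]|.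
have rk_lt (A : {set V}) u v : u \in A -> c u < c v -> rk A u < rk A v.
  move=> uA cuv; rewrite /rk.
  have -> : #|[set y in A | c y < c u]| = #|u |: [set y in A | c y < c u]| - 1.
    by rewrite cardsU1 !inE ltnn andbF /= add1n subn1.
  rewrite ltn_subLR ?add1n; last by rewrite cardsU1 !inE ltnn andbF.
  rewrite ltnS subset_leq_card //; apply/subsetP => y; rewrite !inE.
  case/orP => [/eqP ->|/andP [-> /ltn_trans]]; first by rewrite uA cuv.
  by move=> /(_ _ cuv) ->.
have rk_bd (A : {set V}) v : v \in A -> rk A v < #|A|.
  move=> vA; rewrite (cardsD1 v A) vA add1n ltnS subset_leq_card //.
  by apply/subsetP => y; rewrite !inE => /andP [yA cy]; rewrite yA andbT; apply/eqP => yv;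
    move: cy; rewrite yv ltnn.
have rk_inj (A : {set V}) u v : u \in A -> v \in A -> rk A u = rk A v -> u = v.
  move=> uA vA ruv; case: (ltngtP (c u) (c v)) => [h|h|/c_inj //].
    by move: (rk_lt _ _ _ uA h); rewrite ruv ltnn.
  by move: (rk_lt _ _ _ vA h); rewrite ruv ltnn.
have inLS v : (v \in L) || (v \in S) by rewrite -in_setU DE inE.
have LnS v : v \in L -> v \notin S by move=> vL; apply/negP => vS; exact: (dLS v).
have SnL v : v \in S -> v \notin L by move=> vS; apply/negP => vL; exact: (dLS v).
have n0 : 0 < n by apply/card_gt0P; exists v0.
pose f v := if v \in S then n.-1 - rk S v else rk L v.
have fb v : f v < n.
  rewrite /f; case: ifP => vS.
    by rewrite (leq_ltn_trans (leq_subr _ _)) // prednK.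
  have vL : v \in L by move: (inLS v); rewrite vS orbF.
  by apply: (leq_trans (rk_bd _ _ vL)); rewrite nV leq_addr.
pose fo := [ffun v => Ordinal (fb v)].
have foE v : (fo v : nat) = f v by rewrite ffunE.
exists fo; split.
- move=> u v /(congr1 val) /=; rewrite !foE /f.
  case uS: (u \in S); case vS: (v \in S).
  + move: (rk_bd _ _ uS) (rk_bd _ _ vS) => hu hv huv.
    by apply: (rk_inj S) => //; move: huv; rewrite nV; lia.
  + have vL : v \in L by move: (inLS v); rewrite vS orbF.
    move: (rk_bd _ _ uS) (rk_bd _ _ vL); rewrite nV; lia.
  + have uL : u \in L by move: (inLS u); rewrite uS orbF.
    move: (rk_bd _ _ vS) (rk_bd _ _ uL); rewrite nV; lia.
  + have uL : u \in L by move: (inLS u); rewrite uS orbF.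
    have vL : v \in L by move: (inLS v); rewrite vS orbF.
    exact: rk_inj.
- have LS l s : l \in L -> s \in S -> k l < k s -> rk L l <= rk S s.
    move=> lL sS kls.
    have h1 : (rk L l).+1 <= #|[set l' in L | k l' <= k l]|.
      rewrite (cardsD1 l) !inE lL leqnn add1n ltnS subset_leq_card //.
      apply/subsetP => y; rewrite !inE => /andP [yL cy]; rewrite yL (c_le _ _ cy) /=.
      by rewrite andbT; apply/eqP => yl; move: cy; rewrite yl ltnn.
    have h2 : #|[set x in S | k x <= k l]| <= rk S s.
      rewrite subset_leq_card //; apply/subsetP => y; rewrite !inE => /andP [-> ky] /=.
      by apply: c_lt; apply: leq_ltn_trans kls.
    by move: (HL l lL); lia.
  have hLS : #|L| <= #|S| by lia.
  apply/bigmax_leqP => u _; apply/bigmax_leqP => v euv; rewrite !foE /f.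
  case uS: (u \in S); case vS: (v \in S).
  + by move: (HS u v uS euv) => /andP [vL _]; move: (SnL _ vS); rewrite vL.
  + move: (HS u v uS euv) => /andP [vL kvu].
    have := LS v u vL uS kvu; have := rk_bd _ _ uS; move: nV; rewrite /n; lia.
  + have uL : u \in L by move: (inLS u); rewrite uS orbF.
    move: euv; rewrite esym => evu.
    move: (HS v u vS evu) => /andP [_ kuv].
    have := LS u v uL vS kuv; have := rk_bd _ _ vS; move: nV; rewrite /n; lia.
  + have uL : u \in L by move: (inLS u); rewrite uS orbF.
    have vL : v \in L by move: (inLS v); rewrite vS orbF.
    have := rk_bd _ _ uL; have := rk_bd _ _ vL; move: nV; rewrite /n; lia.
Qed.

Lemma str_eq b : (forall v, exists w, e v w) -> Good e setT b -> str e = #|V|.+1.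
Proof.
move=> hnb hG; have [f [finj fs]] := str_upper hG.
rewrite /str; case: ex_minnP => m /existsP [g /andP [/injectiveP ginj /eqP gm]] mmin.
apply/eqP; rewrite eqn_leq; apply/andP; split.
  apply: leq_trans fs; apply: mmin; apply/existsP; exists f.
  by rewrite eqxx andbT; apply/injectiveP.
by rewrite -gm; apply: str_lower.
Qed.
End Upper.


Section Forest.
Variables (T : finType) (e : rel T).
Hypotheses (esym : symmetric e) (eirr : irreflexive e) (eac : acyclic e).

Lemma forest_leaf (X : {set T}) : X != set0 ->
  exists2 v, v \in X & forall y z, y \in X -> z \in X -> e v y -> e v z -> y = z.
Proof.
move=> Xn0.
case: (boolP [exists v in X, [forall y in X, forall z in X, e v y ==> e v z ==> (y == z)]]).
  case/exists_inP => v vX /forall_inP H; exists v => // y z yX zX evy evz.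
  by move: (H y yX) => /forall_inP /(_ z zX); rewrite evy evz => /eqP.
move=> Hn.
have H2 : forall v, v \in X -> exists y, exists z, [/\ y \in X, z \in X, e v y, e v z & y != z].
  move=> v vX; move: Hn; rewrite negb_exists_in => /forall_inP /(_ v vX).
  rewrite negb_forall_in => /exists_inP [y yX]; rewrite negb_forall_in => /exists_inP [z zX].
  rewrite negb_imply => /andP [evy]; rewrite negb_imply => /andP [evz yz].
  by exists y, z.
have [x0 x0X] : exists x, x \in X by apply/set0Pn.
exfalso.
suff : forall n x c, #|T| - size c <= n -> uniq (x :: c) -> path e x c ->
  all (mem X) (x :: c) -> False.
  by move=> h; apply: (h #|T| x0 [::]); rewrite /= ?subn0 ?x0X.
elim=> [|n IH] x c hn hu hp hX.
  have := max_card (mem (x :: c)); rewrite (card_uniqP hu) /= => h; move: hn; rewrite leqn0 subn_eq0 leqNgt; by rewrite h.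
move: (hX); rewrite /= => /andP [xX cX].
have [y [z [yX zX exy exz yz]]] := H2 x xX.
have ext w : w \in X -> e x w -> w \notin x :: c -> False.
  move=> wX exw wn; apply: (IH w (x :: c)) => //=.
  - by rewrite subnS; case: (#|T| - size c) hn.
  - by apply/andP; split.
  - by rewrite esym exw hp.
  - by rewrite wX xX cX.
case: c hn hu hp hX cX ext => [|h c'] hn hu hp hX cX ext.
  by apply: (ext y yX exy); rewrite inE; apply/eqP => yx; move: exy; rewrite yx eirr.
have [w [wX exw wh]] : exists w, [/\ w \in X, e x w & w != h].
  case: (eqVneq y h) => [yh|yh]; last by exists y.
  by exists z; split => //; rewrite -yh eq_sym.
case wc: (w \in x :: h :: c'); last by apply: (ext w wX exw); rewrite wc.
have wc' : w \in c'.
  move: wc; rewrite !inE (negbTE wh) /= => /orP [/eqP wx|//].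
  by move: exw; rewrite wx eirr.
case/splitPr: wc' hu hp => c1 c2 hu hp.
set p := rcons (h :: c1) w.
have cE : h :: c1 ++ w :: c2 = p ++ c2 by rewrite /p cat_rcons.
apply: eac; exists (x :: p); apply/and3P; split.
- by move: hu; rewrite cE -cat_cons cat_uniq => /andP [].
- by rewrite /= /p size_rcons.
- rewrite /cycle rcons_path last_rcons esym exw andbT.
  by move: hp; rewrite cE cat_path => /andP [].
Qed.
End Forest.


Definition DS (VH VT : finType) (A : {set VH}) (B : {set VT}) : {set (VH + VT)%type} :=
  [set v | match v with inl x => x \in A | inr y => y \in B end].

Section DSfacts.
Variables (VH VT : finType).
Implicit Types (A : {set VH}) (B : {set VT}).

Lemma DSl A B x : (inl x \in DS A B) = (x \in A). Proof. by rewrite inE. Qed.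
Lemma DSr A B y : (inr y \in DS A B) = (y \in B). Proof. by rewrite inE. Qed.

Lemma DSU A B A' B' : DS A B :|: DS A' B' = DS (A :|: A') (B :|: B').
Proof. by apply/setP => [[x|y]]; rewrite !inE. Qed.

Lemma DSTT : DS [set: VH] [set: VT] = setT.
Proof. by apply/setP => [[x|y]]; rewrite !inE. Qed.

Lemma disjDS A B A' B' : disj A A' -> disj B B' -> disj (DS A B) (DS A' B').
Proof. by move=> h1 h2 [x|y]; rewrite !inE; [apply: h1 | apply: h2]. Qed.

Lemma disj0 (T : finType) (A : {set T}) : disj set0 A.
Proof. by move=> x; rewrite inE. Qed.
Lemma disj0r (T : finType) (A : {set T}) : disj A set0.
Proof. by move=> x _; rewrite inE. Qed.

Lemma cardDS A B : #|DS A B| = #|A| + #|B|.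
Proof.
have -> : DS A B = inl @: A :|: inr @: B.
  apply/setP => [[x|y]]; rewrite !inE.
  - rewrite (mem_imset _ _ (@inl_inj _ _)); case: imsetP => [[y _ //]|_]; by rewrite orbF.
  - rewrite (mem_imset _ _ (@inr_inj _ _)); case: imsetP => [[x _ //]|_] //.
rewrite cardsU_disj ?card_imset //; try exact: inl_inj; try exact: inr_inj.
by move=> v /imsetP [x _ ->] /imsetP [y _].
Qed.
End DSfacts.


Section TPhase.
Variables (VH VT : finType) (eH : rel VH) (eT : rel VT).
Hypotheses (symH : symmetric eH) (symT : symmetric eT) (irrT : irreflexive eT).
Hypothesis acT : acyclic eT.
Local Notation G := (sum_rel eH eT).
Local Notation DT B := (@DS VH VT set0 B).

Lemma Gsym : symmetric G.
Proof. by move=> [x|x] [y|y] /=; first [exact: symH | exact: symT | done]. Qed.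

Let P := PT eT.
Let N := Nbh eT P.
Definition pend (A : {set VT}) := [set y in P | [exists x in A, eT x y]].

Lemma F1 q x y : q \in P -> eT q x -> eT q y -> x = y.
Proof.
rewrite /P inE => /andP [/cards1P [a ha] _] hx hy.
have : x \in [set z | eT q z] by rewrite inE.
have : y \in [set z | eT q z] by rewrite inE.
by rewrite ha !inE => /eqP -> /eqP ->.
Qed.

Lemma F2 x : x \in N -> x \notin P.
Proof.
rewrite /N inE => /exists_inP [q qP eqx].
have := qP; rewrite /P inE => /andP [_ /existsP [y /andP [eqy dy]]].
have xy := F1 qP eqx eqy; subst y.
by rewrite inE negb_and; apply/orP; left; rewrite neq_ltn dy orbT.
Qed.

Lemma F3 q : q \in P -> exists2 x, x \in N & eT x q.
Proof.
move=> qP; have := qP; rewrite /P inE => /andP [_ /existsP [y /andP [eqy _]]].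
by exists y; [rewrite /N inE; apply/exists_inP; exists q | rewrite symT].
Qed.

Lemma pendN : pend N = P.
Proof.
apply/setP => q; rewrite inE; case qP: (q \in P) => //=.
by have [x xN exq] := F3 qP; apply/exists_inP; exists x.
Qed.

Lemma phaseT1 (A : {set VT}) : A \subset N ->
  Good G (DT (A :|: pend A)) (#|pend A| - #|A|) /\ #|A| <= #|pend A|.
Proof.
have [n] := ubnP #|A|; elim: n A => // n IH A ltAn sAN.
case: (set_0Vmem A) => [->|[x xA]].
  have -> : pend set0 = set0.
    apply/setP => y; rewrite !inE; apply/negP => /andP [_ /exists_inP [z]].
    by rewrite inE.
  rewrite setU0 cards0; split => //.
  have -> : DS (@set0 VH) (@set0 VT) = set0 by apply/setP => [[a|a]]; rewrite !inE.
  exact: good0.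
set A' := A :\ x.
have cA : #|A| = (#|A'|).+1 by rewrite (cardsD1 x A) xA.
have sA'N : A' \subset N by apply: subset_trans sAN; apply: subsetDl.
have ltA' : #|A'| < n by move: ltAn; rewrite cA.
have [IHg IHc] := IH A' ltA' sA'N.
have xN : x \in N by apply: (subsetP sAN).
pose px := [set y in P | eT x y].
have pendE : pend A = px :|: pend A'.
  apply/setP => y; rewrite in_setU ![y \in pend _]in_set [y \in px]in_set.
  case: (y \in P) => //=.
  apply/exists_inP/idP => [[z zA ezy]|/orP [exy|/exists_inP [z]]].
  - case: (eqVneq z x) => [zx|zx]; first by rewrite -zx ezy.
    by apply/orP; right; apply/exists_inP; exists z => //; rewrite !inE zx zA.
  - by exists x.
  - by rewrite !inE => /andP [_ zA] ezy; exists z.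
have dpx : disj px (pend A').
  move=> y; rewrite [y \in px]in_set [y \in pend _]in_set => /andP [yP exy] /andP [_ /exists_inP [z]].
  rewrite /A' in_setD1 => /andP [zx _] ezy.
  by move: (F1 yP (etrans (symT y x) exy) (etrans (symT y z) ezy)) zx => ->; rewrite eqxx.
have px0 : 0 < #|px|.
  have := xN; rewrite /N inE => /exists_inP [q qP eqx].
  by apply/card_gt0P; exists q; rewrite in_set qP symT.
have cpend : #|pend A| = #|px| + #|pend A'| by rewrite pendE cardsU_disj.
split; last by lia.
have -> : DT (A :|: pend A) =
  DT (A' :|: pend A') :|: DT [set x] :|: DT px.
  rewrite !DSU !setU0; congr DS.
  apply/setP => y; rewrite pendE !in_setU in_set1 /A' in_setD1.
  case: (eqVneq y x) => [->|yx] /=; first by rewrite xA !orbT.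
  by case: (y \in A); case: (y \in px); case: (y \in pend (A :\ x)).
have xnP : x \notin P := F2 xN.
apply: (good_step Gsym IHg).
- apply: disjDS; first exact: disj0.
  move=> y; rewrite in_set1 => /eqP ->; rewrite [x \in px]in_set => /andP [xP _].
  by move: xnP; rewrite xP.
- apply: disjDS; first exact: disj0.
  move=> y; rewrite in_set1 => /eqP ->; rewrite in_setU /A' in_setD1 eqxx /=.
  rewrite [x \in pend _]in_set => /andP [xP _].
  by move: xnP; rewrite xP.
- apply: disjDS; first exact: disj0.
  move=> y yp; rewrite in_setU => /orP [yA'|ypA]; last exact: (dpx y).
  have yN : y \in N by apply: (subsetP sA'N).
  by move: yp; rewrite [y \in px]in_set => /andP [yP _]; move: (F2 yN); rewrite yP.
- by rewrite cardDS cards0 cards1.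
- by rewrite !cardDS !cards0 cards1 /=; lia.
- move=> [a|q] [b|z] //=; rewrite ?DSl ?DSr ?in_set0 //.
  rewrite [q \in px]in_set => /andP [qP exq] eqz.
  by rewrite in_set1 (F1 qP eqz (etrans (symT q x) exq)) eqxx.
Qed.

Lemma phaseT2 BT b : Good G (DT BT) b -> Good G (DT setT) b.
Proof.
have [n] := ubnP #|~: BT|; elim: n BT b => // n IH BT b lt hG.
case: (eqVneq (~: BT) set0) => [e0|ne].
  have -> : (setT : {set VT}) = BT.
    apply/setP => y; move: e0 => /setP /(_ y); rewrite !inE.
    by case: (y \in BT).
  exact: hG.
have [v vX vu] := forest_leaf symT irrT acT ne.
have vnB : v \notin BT by move: vX; rewrite inE.
have ltC (B : {set VT}) : v \in B -> #|~: (BT :|: B)| < n.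
  move=> vB; rewrite -ltnS; apply: leq_trans lt; rewrite ltnS (cardsD1 v (~: BT)) vX add1n ltnS.
  apply: subset_leq_card; apply/subsetP => y; rewrite !inE negb_or => /andP [yB yB'].
  by rewrite yB andbT; apply/eqP => yv; move: yB'; rewrite yv vB.
case: (boolP [exists w in ~: BT, eT v w]) => [/exists_inP [w wX evw]|hno].
- apply: (IH (BT :|: ([set w] :|: [set v]))); first by apply: ltC; rewrite !inE eqxx orbT.
  have -> : DT (BT :|: ([set w] :|: [set v])) =
      DT BT :|: DT [set w] :|: DT [set v] by rewrite !DSU !setU0 setUA.
  apply: (good_step Gsym hG).
  + apply: disjDS; first exact: disj0.
    by move=> y; rewrite !inE => /eqP -> /eqP wv; move: evw; rewrite wv irrT.
  + apply: disjDS; first exact: disj0.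
    by move=> y; rewrite !inE => /eqP ->; move: wX; rewrite inE => /negbTE ->.
  + apply: disjDS; first exact: disj0.
    by move=> y; rewrite !inE => /eqP ->; rewrite (negbTE vnB).
  + by rewrite cardDS cards0 cards1.
  + by rewrite !cardDS !cards0 !cards1.
  + move=> [a|y] [c|z] //=; rewrite ?inE // => /eqP -> evz.
    case zB: (z \in BT); first by rewrite orbT.
    by rewrite (vu z w) ?eqxx // inE zB.
- apply: (IH (BT :|: (set0 :|: [set v]))); first by apply: ltC; rewrite !inE eqxx.
  have -> : DT (BT :|: (set0 :|: [set v])) =
      DT BT :|: DT set0 :|: DT [set v] by rewrite !DSU !setU0 !set0U.
  apply: (good_step Gsym hG).
  + by apply: disjDS; apply: disj0.
  + by apply: disjDS; apply: disj0.
  + apply: disjDS; first exact: disj0.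
    by move=> y; rewrite !inE => /eqP ->; rewrite (negbTE vnB).
  + by rewrite cardDS !cards0.
  + by rewrite !cardDS !cards0 cards1; lia.
  + move=> [a|y] [c|z] //=; rewrite ?inE // => /eqP -> evz.
    case zB: (z \in BT); first by rewrite orbT.
    by move: hno; rewrite negb_exists_in => /forall_inP /(_ z); rewrite inE zB evz => /(_ isT).
Qed.
End TPhase.


Section HPhase.
Variables (VH VT : finType) (eH : rel VH) (eT : rel VT).
Hypotheses (symH : symmetric eH) (irrH : irreflexive eH) (symT : symmetric eT).
Hypothesis nbH : forall x, exists y, eH x y.
Variables (s : nat) (W : nat -> {set VH}) (u : nat -> VH).
Hypothesis hd : is_dseq eH s W u.
Local Notation G := (sum_rel eH eT).
Local Notation DH A := (@DS VH VT A setT).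
Local Notation dv i := (dval eH s W u i).
Local Notation zv i := (zval eH s W u i).
Local Notation Zm := (Zmin eH s W u).

Lemma mem_core (X : {set VH}) y : (y \in core eH X) = (y \notin iso eH X) && (y \in X).
Proof. by rewrite /core in_setD. Qed.

Lemma iso_sub (X : {set VH}) x : x \in iso eH X -> x \in X.
Proof. by rewrite inE => /andP []. Qed.

Lemma iso_nb (X : {set VH}) x y : x \in iso eH X -> y \in X -> ~~ eH x y.
Proof. by rewrite inE => /andP [_ /forall_inP H] /H. Qed.

Lemma core_sub (X : {set VH}) x : x \in core eH X -> x \in X.
Proof. by rewrite mem_core => /andP []. Qed.

Lemma nb_core (X : {set VH}) x y : x \in X -> y \in X -> eH x y -> x \in core eH X.
Proof.
move=> xX yX exy; rewrite mem_core xX andbT; apply/negP => /iso_nb /(_ yX).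
by rewrite exy.
Qed.

Lemma Zm_le_z i : (Zm <= 0)%R -> 1 <= i <= s -> (Zm <= zv i)%R.
Proof.
move=> Z0 /andP [i1 iS].
case: (eqVneq i 1) => [->|i2]; first by rewrite /zval big_geq.
rewrite /Zmin; apply: ge_bigmin_seq => //; rewrite mem_index_iota; lia.
Qed.

Lemma z_step i : 1 <= i -> zv i.+1 = (zv i + ((mnum eH (W i.+1)).+1)%:Z - (dv i.+1)%:Z)%R.
Proof.
move=> i1; rewrite /zval big_nat_recr /=; last by lia.
by rewrite /yval addrA.
Qed.


Lemma stepH i b : 1 <= i < s -> Good G (DH (~: core eH (W i))) b -> dv i <= b.+1 ->
  Good G (DH (~: core eH (W i.+1))) (b + (mnum eH (W i.+1)).+1 - dv i).
Proof.
move=> /andP [i1 iS] hG hdb.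
have [_ _ Hs _] := hd.
have [_ ui hW] := Hs i (introT andP (conj i1 iS)).
pose Ni := [set y in W i | eH (u i) y].
have dvE : dv i = #|Ni| by rewrite /dval iS.
have uiW : u i \in W i := core_sub ui.
have W1E y : (y \in W i.+1) = (y \in core eH (W i)) && ((y != u i) && ~~ eH (u i) y).
  by rewrite hW inE.
have uinW1 : u i \notin W i.+1 by rewrite W1E eqxx andbF.
have coreStep : ~: core eH (W i) :|: Ni :|: (u i |: iso eH (W i.+1)) = ~: core eH (W i.+1).
  apply/setP => y; rewrite !in_setU !in_setC in_set1 [y \in Ni]inE.
  case yI: (y \in iso eH (W i.+1)).
    by rewrite !orbT mem_core yI.
  rewrite orbF [y \in core eH (W i.+1)]mem_core yI /= W1E.
  case yC: (y \in core eH (W i)) => //=.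
  rewrite (core_sub yC) /=.
  by case: (eqVneq y (u i)); case: (eH (u i) y).
rewrite -coreStep.
have -> : DH (~: core eH (W i) :|: Ni :|: (u i |: iso eH (W i.+1))) =
  DH (~: core eH (W i)) :|: @DS VH VT Ni set0 :|: @DS VH VT (u i |: iso eH (W i.+1)) set0.
  by rewrite !DSU !setU0.
have msz : #|u i |: iso eH (W i.+1)| = (mnum eH (W i.+1)).+1.
  rewrite cardsU1 /mnum; case: (boolP (u i \in iso eH (W i.+1))) => // /iso_sub.
  by rewrite (negbTE uinW1).
apply: (good_step (Gsym symH symT) hG).
- apply: disjDS; last exact: disj0.
  move=> y; rewrite inE => /andP [_ euy]; rewrite in_setU1 => /orP [/eqP yu|/iso_sub].
    by move: euy; rewrite yu irrH.
  by rewrite W1E euy !andbF.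
- apply: disjDS; last exact: disj0.
  move=> y; rewrite inE => /andP [yW euy]; rewrite in_setC.
  by rewrite (nb_core yW uiW) // symH.
- apply: disjDS; last exact: disj0.
  move=> y; rewrite in_setU1 in_setC => /orP [/eqP ->|/iso_sub]; first by rewrite ui.
  by rewrite W1E => /andP [->].
- by rewrite cardDS cards0 addn0 -dvE.
- rewrite !cardDS !cards0 !addn0 msz -dvE; lia.
- move=> [x|x] [z|z] //=; rewrite ?DSl ?DSr ?in_set0 //.
  rewrite in_setU1 => /orP [/eqP ->|xI] exz.
    case zW: (z \in W i); first by rewrite inE zW exz.
    by rewrite in_setC; apply/orP; right; apply/negP => /core_sub; rewrite zW.
  have xW1 := iso_sub xI.
  case zC: (z \in core eH (W i)); last by rewrite in_setC zC orbT.
  case: (eqVneq z (u i)) => [zu|zu].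
    by move: xW1; rewrite W1E -zu symH exz !andbF.
  case euz: (eH (u i) z); first by rewrite inE (core_sub zC) euz.
  have zW1 : z \in W i.+1 by rewrite W1E zC zu euz.
  by move: (iso_nb xI zW1); rewrite exz.
Qed.

Lemma phaseH b0 : Good G (DH set0) b0 -> (Zm <= 0)%R -> ((dv 1)%:Z - Zm <= b0%:Z)%R ->
  forall i, 1 <= i <= s -> exists b, Good G (DH (~: core eH (W i))) b /\
    (b0%:Z - (dv 1)%:Z + (dv i)%:Z + zv i <= b%:Z)%R.
Proof.
move=> hG Z0 hb0; elim=> [//|i IH] /andP [i1 iS].
case: (eqVneq i 0) => [i0|in0].
  subst i; have [_ W1 _ _] := hd.
  have -> : ~: core eH (W 1) = set0.
    apply/setP => y; rewrite W1 in_setC mem_core in_setT andbT negbK in_set0.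
    apply/negP => /iso_nb; have [z eyz] := nbH y.
    by move=> /(_ z (in_setT z)); rewrite eyz.
  exists b0; split => //.
  have -> : zv 1 = 0%R by rewrite /zval big_geq.
  lia.
have i1s : 1 <= i <= s by apply/andP; split; lia.
have [b [hGb hb]] := IH i1s.
have hZ := Zm_le_z Z0 i1s.
have hdb : dv i <= b.+1 by lia.
exists (b + (mnum eH (W i.+1)).+1 - dv i); split.
  by apply: stepH => //; apply/andP; split; lia.
rewrite z_step; last by lia.
lia.
Qed.

Lemma termH b : Good G (DH (~: core eH (W s))) b -> dv s <= b.+1 ->
  exists b', Good G setT b'.
Proof.
move=> hG hdb; have [s2 _ _ hst] := hd.
have dvE : dv s = dstop eH (W s) by rewrite /dval ltnn.
case: (boolP (stop_complete eH (W s))) => hc.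
  set K := core eH (W s).
  have /set0Pn [c cK] : K != set0 by move: hc => /andP [].
  have dsE : dstop eH (W s) = #|K :\ c| by rewrite /dstop hc (cardsD1 c K) cK.
  exists 0.
  have -> : setT = DH (~: K) :|: @DS VH VT (K :\ c) set0 :|: @DS VH VT [set c] set0.
    rewrite !DSU !setU0 -DSTT; congr DS; apply/setP => y.
    rewrite !in_setU in_setC in_setD1 in_set1 in_setT.
    by case: (eqVneq y c) => [->|]; rewrite ?cK //=; case: (y \in K).
  apply: (good_step (Gsym symH symT) hG).
  - apply: disjDS; last exact: disj0.
    by move=> y; rewrite in_setD1 in_set1 => /andP [/negbTE ->].
  - apply: disjDS; last exact: disj0.
    by move=> y; rewrite in_setD1 in_setC => /andP [_ ->].
  - apply: disjDS; last exact: disj0.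
    by move=> y; rewrite in_set1 in_setC => /eqP ->; rewrite cK.
  - by rewrite cardDS cards0 addn0 -dsE -dvE.
  - by rewrite !cardDS !cards0 !addn0 cards1 -dsE -dvE; lia.
  - move=> [x|x] [z|z] //=; rewrite ?DSl ?DSr ?in_set0 // in_set1 => /eqP -> ecz.
    case zK: (z \in K); last by rewrite in_setC zK orbT.
    rewrite in_setD1 zK andbT; apply/orP; left; apply/eqP => zc.
    by move: ecz; rewrite zc irrH.
have hse : stop_empty eH (W s) by move: hst; rewrite /stopform (negbTE hc) orbF.
have eC : ~: core eH (W s) = setT.
  apply/setP => y; rewrite in_setC in_setT mem_core negb_and negbK.
  case yW: (y \in W s); last by rewrite orbT.
  move: hse => /andP [_ /forall_inP /(_ y yW) hy].
  by rewrite orbF inE yW hy.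
by rewrite eC DSTT in hG; exists b.
Qed.

End HPhase.

Unset Implicit Arguments.

Theorem mainTheorem8
  (VH : finType) (eH : rel VH) (VT : finType) (eT : rel VT)
  (s : nat) (W : nat -> {set VH}) (u : nat -> VH) :
  symmetric eH -> irreflexive eH ->
  (forall v, 1 <= deg eH v)%N ->
  (exists v, deg eH v <= #|VH| - 2)%N ->
  is_dseq eH s W u ->
  (Zmin eH s W u <= 0)%R ->
  symmetric eT -> irreflexive eT ->
  acyclic eT ->
  (forall v, 1 <= deg eT v)%N ->
  (3 <= #|VT|)%N ->
  (#|PT eT|%:Z - #|Nbh eT (PT eT)|%:Z >=
     (dval eH s W u 1)%:Z - Zmin eH s W u)%R ->
  str (sum_rel eH eT) = (#|VH| + #|VT|).+1.
Proof.
move=> symH irrH degH [v0 _] hd Z0 symT irrT acT degT _ hA.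
have nbH x : exists y, eH x y.
  by have /card_gt0P [y] := degH x; rewrite inE; exists y.
have nbT x : exists y, eT x y.
  by have /card_gt0P [y] := degT x; rewrite inE; exists y.
have [g1 c1] := phaseT1 symH symT (subxx (Nbh eT (PT eT))).
rewrite pendN // in g1 c1.
have g2 := phaseT2 symH symT irrT acT g1.
have hb0 : ((dval eH s W u 1)%:Z - Zmin eH s W u <= (#|PT eT| - #|Nbh eT (PT eT)|)%:Z)%R.
  by lia.
have [s2 _ _ _] := hd.
have is_ : (1 <= s <= s)%N by apply/andP; split; lia.
have [b [g3 hb]] := phaseH symH irrH symT nbH hd g2 Z0 hb0 is_.
have hZ := Zm_le_z Z0 is_.
have hdb : (dval eH s W u s <= b.+1)%N by lia.
have [b' g4] := termH symH irrH symT hd g3 hdb.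
rewrite -card_sum.
apply: (str_eq (inl v0) (Gsym symH symT) _ g4).
by move=> [x|x]; [have [y h] := nbH x; exists (inl y) | have [y h] := nbT x; exists (inr y)].
Qed.
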